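(* Let $P$ and $Q$ be posets. If the product space $\Sigma P\times \Sigma Q$ is a Fréchet space, then the Scott topology of the product poset $P\times Q$ coincides with the product topology of $\Sigma P$ and $\Sigma Q$, i.e. $\Sigma(P\times Q)=\Sigma P\times\Sigma Q$.
   Context: For a poset $P$, a subset $U\subseteq P$ is Scott open if $U$ is an upper set and for every directed $D\subseteq P$ whose supremum $\bigvee D$ exists, $\bigvee D\in U$ implies $D\cap U\neq\emptyset$. The Scott open sets form the Scott topology $\sigma(P)$, and $\Sigma P=(P,\sigma(P))$. The product poset $P\times Q$ carries the coordinatewise order. A topological space $X$ is a Fréchet space if for every subset $A\subseteq X$ and every $x$ in the closure of $A$, there is a sequence $(x_n)_{n\in\omega}$ of elements of $A$ converging to $x$. *)

(* Defs.v *)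
Set Implicit Arguments.

Section Defs.

(* A poset is a type with a relation [le]; the partial-order axioms are
   given as hypotheses of the theorem (see is_poset). *)
Definition is_poset {T : Type} (le : T -> T -> Prop) : Prop :=
  (forall x, le x x) /\
  (forall x y, le x y -> le y x -> x = y) /\
  (forall x y z, le x y -> le y z -> le x z).

Definition upper_set {T : Type} (le : T -> T -> Prop) (U : T -> Prop) : Prop :=
  forall x y, U x -> le x y -> U y.

Definition directed {T : Type} (le : T -> T -> Prop) (D : T -> Prop) : Prop :=
  (exists d, D d) /\
  (forall x y, D x -> D y -> exists z, D z /\ le x z /\ le y z).

Definition is_sup {T : Type} (le : T -> T -> Prop) (D : T -> Prop) (s : T) : Prop :=
  (forall d, D d -> le d s) /\
  (forall u, (forall d, D d -> le d u) -> le s u).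

Definition scott_open {T : Type} (le : T -> T -> Prop) (U : T -> Prop) : Prop :=
  upper_set le U /\
  forall (D : T -> Prop) (s : T),
    directed le D -> is_sup le D s -> U s -> exists d, D d /\ U d.

Definition prod_le {P Q : Type} (leP : P -> P -> Prop) (leQ : Q -> Q -> Prop)
  (x y : P * Q) : Prop := leP (fst x) (fst y) /\ leQ (snd x) (snd y).

Definition prod_open {P Q : Type} (openP : (P -> Prop) -> Prop)
  (openQ : (Q -> Prop) -> Prop) (U : P * Q -> Prop) : Prop :=
  forall z, U z -> exists (A : P -> Prop) (B : Q -> Prop),
    openP A /\ openQ B /\ A (fst z) /\ B (snd z) /\
    (forall a b, A a -> B b -> U (a, b)).

Definition in_closure {X : Type} (opn : (X -> Prop) -> Prop) (A : X -> Prop) (x : X) : Prop :=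
  forall U, opn U -> U x -> exists a, A a /\ U a.

Definition seq_converges {X : Type} (opn : (X -> Prop) -> Prop) (s : nat -> X) (x : X) : Prop :=
  forall U, opn U -> U x -> exists N, forall n, N <= n -> U (s n).

Definition frechet {X : Type} (opn : (X -> Prop) -> Prop) : Prop :=
  forall (A : X -> Prop) (x : X), in_closure opn A x ->
    exists s : nat -> X, (forall n, A (s n)) /\ seq_converges opn s x.

End Defs.

(* Main.v *)
Require Import Defs.
From Stdlib Require Import Classical Lia Arith.


Lemma up2 {P Q : Type} {leP : P -> P -> Prop} {leQ : Q -> Q -> Prop} {U : P * Q -> Prop} : upper_set (prod_le leP leQ) U ->
  forall {x y x' y'}, U (x, y) -> leP x x' -> leQ y y' -> U (x', y').
Proof. intros HU x y x' y' H1 H2 H3. apply (HU (x, y)); [exact H1| split; assumption]. Qed.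

Lemma pick1 {P Q : Type} {leP : P -> P -> Prop} {leQ : Q -> Q -> Prop} {U : P * Q -> Prop} {D s} q : is_poset leQ -> scott_open (prod_le leP leQ) U ->
  directed leP D -> is_sup leP D s -> U (s, q) -> exists d, D d /\ U (d, q).
Proof.
  intros [rQ _] [_ HU] [[d0 Hd0] Hdir] [Hub Hl] Hs.
  destruct (HU (fun w => D (fst w) /\ snd w = q) (s, q)) as [[x y] [[Hx Hy] Hxy]].
  - split. exists (d0, q); simpl; auto.
    intros [x1 y1] [x2 y2] [H1 E1] [H2 E2]; simpl in *; subst.
    destruct (Hdir _ _ H1 H2) as [z [Hz [Hz1 Hz2]]]. exists (z, q); simpl.
    repeat split; auto.
  - split. intros [x y] [Hx Hy]; simpl in *; subst; split; simpl; auto.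
    intros [u v] Hu. split; simpl.
    + apply Hl. intros d Hd. apply (Hu (d, q)). simpl; auto.
    + apply (Hu (d0, q)). simpl; auto.
  - exact Hs.
  - simpl in *; subst. exists x; auto.
Qed.

Lemma pick2 {P Q : Type} {leP : P -> P -> Prop} {leQ : Q -> Q -> Prop} {U : P * Q -> Prop} {D s} p : is_poset leP -> scott_open (prod_le leP leQ) U ->
  directed leQ D -> is_sup leQ D s -> U (p, s) -> exists d, D d /\ U (p, d).
Proof.
  intros [rP _] [_ HU] [[d0 Hd0] Hdir] [Hub Hl] Hs.
  destruct (HU (fun w => D (snd w) /\ fst w = p) (p, s)) as [[x y] [[Hx Hy] Hxy]].
  - split. exists (p, d0); simpl; auto.
    intros [x1 y1] [x2 y2] [H1 E1] [H2 E2]; simpl in *; subst.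
    destruct (Hdir _ _ H1 H2) as [z [Hz [Hz1 Hz2]]]. exists (p, z); simpl.
    repeat split; auto.
  - split. intros [x y] [Hx Hy]; simpl in *; subst; split; simpl; auto.
    intros [u v] Hu. split; simpl.
    + apply (Hu (p, d0)). simpl; auto.
    + apply Hl. intros d Hd. apply (Hu (p, d)). simpl; auto.
  - exact Hs.
  - simpl in *; subst. exists y; auto.
Qed.

Lemma slice2 {P Q : Type} {leP : P -> P -> Prop} {leQ : Q -> Q -> Prop} {U : P * Q -> Prop} x : is_poset leP -> scott_open (prod_le leP leQ) U ->
  scott_open leQ (fun y => U (x, y)).
Proof.
  intros HP HU. split.
  - intros y y' Hy Hl. destruct HP as [rP _]. exact (up2 (proj1 HU) Hy (rP x) Hl).
  - intros D s Hd Hs Hx. exact (pick2 _ HP HU Hd Hs Hx).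
Qed.

Lemma true_open (R : Type) (le : R -> R -> Prop) : scott_open le (fun _ => True).
Proof. split. intros x y _ _; exact I. intros D s [[d Hd] _] _ _. exists d; auto. Qed.


Theorem theorem3p5 (P Q : Type) (leP : P -> P -> Prop) (leQ : Q -> Q -> Prop) :
  is_poset leP -> is_poset leQ ->
  frechet (prod_open (scott_open leP) (scott_open leQ)) ->
  forall U : P * Q -> Prop,
    scott_open (prod_le leP leQ) U <-> prod_open (scott_open leP) (scott_open leQ) U.
Proof.
  intros HP HQ Hfr U. split.
  - intros HU [a b] Hz. apply NNPP; intro Hno.
    assert (Hcl : in_closure (prod_open (scott_open leP) (scott_open leQ))
                    (fun w => ~ U w) (a, b)).
    { intros W HW HWz. destruct (HW _ HWz) as [A [B [HA [HB [Ha [Hb Hsub]]]]]].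
      apply NNPP; intro Hn. apply Hno. exists A, B. split; [exact HA|split;[exact HB|split;[exact Ha|split;[exact Hb|]]]].
      intros x y Hx Hy. apply NNPP; intro Hxy. apply Hn. exists (x, y). split; auto. }
    destruct (Hfr _ _ Hcl) as [c [HcU Hconv]].
    assert (Hp : forall V, scott_open leP V -> V a ->
               exists N, forall n, N <= n -> V (fst (c n))).
    { intros V HV Ha. apply (Hconv (fun w => V (fst w))); [|exact Ha].
      intros w Hw. exists V, (fun _ => True). split; [exact HV|split;[apply true_open|split;[exact Hw|split;[exact I|]]]]. intros x y Hx _; exact Hx. }
    assert (Hq : forall V, scott_open leQ V -> V b ->
               exists N, forall n, N <= n -> V (snd (c n))).
    { intros V HV Hb. apply (Hconv (fun w => V (snd w))); [|exact Hb].
      intros w Hw. exists (fun _ => True), V. split; [apply true_open|split;[exact HV|split;[exact I|split;[exact Hw|]]]]. intros x y _ Hy; exact Hy. }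
    destruct (Hq _ (slice2 a HP HU) Hz) as [M HM]. simpl in HM.
    set (A := fun x => U (x, b) /\ forall m, M <= m -> U (x, snd (c m))).
    assert (HA : scott_open leP A).
    { pose proof HP as [rP [_ tP]]. pose proof HQ as [rQ [_ tQ]]. split.
      - intros x y [H1 H2] Hl. split.
        + exact (up2 (proj1 HU) H1 Hl (rQ b)).
        + intros m Hm. exact (up2 (proj1 HU) (H2 m Hm) Hl (rQ _)).
      - intros D s Hd Hs [Hsb Hsm].
        destruct (pick1 _ HQ HU Hd Hs Hsb) as [d0 [Hd0 Hd0b]].
        destruct (Hq _ (slice2 d0 HP HU) Hd0b)
          as [M' HM']. simpl in HM'.
        assert (Hind : forall k, exists d, D d /\ leP d0 d /\
                  forall m, m < k -> M <= m -> U (d, snd (c m))).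
        { induction k as [|k IH].
          - exists d0. split; [exact Hd0|split; [apply rP|]]. intros m Hm; lia.
          - destruct IH as [d [Hd1 [Hd2 Hd3]]].
            destruct (le_lt_dec M k) as [Hk|Hk].
            + destruct (pick1 _ HQ HU Hd Hs (Hsm k Hk)) as [dk [Hdk Hdkq]].
              destruct (proj2 Hd _ _ Hd1 Hdk) as [e [He [He1 He2]]].
              exists e. split; [exact He|split; [exact (tP _ _ _ Hd2 He1)|]].
              intros m Hm1 Hm2. destruct (Nat.eq_dec m k) as [->|Hne].
              * exact (up2 (proj1 HU) Hdkq He2 (rQ _)).
              * exact (up2 (proj1 HU) (Hd3 m ltac:(lia) Hm2) He1 (rQ _)).
            + exists d. split; [exact Hd1|split; [exact Hd2|]]. intros m Hm1 Hm2; lia. }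
        destruct (Hind M') as [d [Hd1 [Hd2 Hd3]]].
        exists d. split; [exact Hd1|]. split.
        + exact (up2 (proj1 HU) Hd0b Hd2 (rQ _)).
        + intros m Hm. destruct (le_lt_dec M' m) as [Hm'|Hm'].
          * exact (up2 (proj1 HU) (HM' m Hm') Hd2 (rQ _)).
          * exact (Hd3 m Hm' Hm). }
    assert (HAa : A a) by (split; [exact Hz| exact HM]).
    destruct (Hp A HA HAa) as [N HN].
    destruct (HN (N + M) ltac:(lia)) as [_ H2].
    apply (HcU (N + M)). specialize (H2 (N + M) ltac:(lia)).
    destruct (c (N + M)); exact H2.
  - intros HU. split.
    + intros z w Hz [H1 H2].
      destruct (HU z Hz) as [A [B [HA [HB [Ha [Hb Hsub]]]]]].
      destruct w as [x y].
      exact (Hsub x y (proj1 HA _ _ Ha H1) (proj1 HB _ _ Hb H2)).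
    + intros D s Hd Hs Hsz.
      destruct (HU s Hsz) as [A [B [HA [HB [Ha [Hb Hsub]]]]]].
      destruct Hd as [[d0 Hd0] Hdir]. destruct Hs as [Hub Hl].
      destruct (proj2 HA (fun p => exists d, D d /\ fst d = p) (fst s)) as [p [[d1 [Hd1 E1]] Hp1]].
      { split. exists (fst d0); exists d0; auto.
        intros x y [dx [Hx Ex]] [dy [Hy Ey]]. subst.
        destruct (Hdir _ _ Hx Hy) as [e [He [[Hx1 _] [Hy1 _]]]].
        exists (fst e). split; [exists e; auto|auto]. }
      { split. intros p0 [d [Hd' E]]; subst. exact (proj1 (Hub d Hd')).
        intros u Hu. assert (H := Hl (u, snd s)). apply H.
        intros d Hd'. split; simpl. apply Hu. exists d; auto. exact (proj2 (Hub d Hd')). }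
      { exact Ha. }
      destruct (proj2 HB (fun p => exists d, D d /\ snd d = p) (snd s)) as [q [[d2 [Hd2 E2]] Hq2]].
      { split. exists (snd d0); exists d0; auto.
        intros x y [dx [Hx Ex]] [dy [Hy Ey]]. subst.
        destruct (Hdir _ _ Hx Hy) as [e [He [[_ Hx1] [_ Hy1]]]].
        exists (snd e). split; [exists e; auto|auto]. }
      { split. intros p0 [d [Hd' E]]; subst. exact (proj2 (Hub d Hd')).
        intros u Hu. assert (H := Hl (fst s, u)). apply H.
        intros d Hd'. split; simpl. exact (proj1 (Hub d Hd')). apply Hu. exists d; auto. }
      { exact Hb. }
      subst. destruct (Hdir _ _ Hd1 Hd2) as [e [He [[He1 _] [_ He2]]]].
      exists e. split; [exact He|]. destruct e as [x y].
      exact (Hsub x y (proj1 HA _ _ Hp1 He1) (proj1 HB _ _ Hq2 He2)).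
Qed.
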